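(* Let $(A,+,\cdot)$ be a left brace with $A^{(3)}=\{0\}$ and let $a\in A$. For $i\in\mathbb{Z}$ let $a_i=\lambda_{a^i}(a)=-a^i+a^{i+1}$ (where $a^i$ is the $i$-th power of $a$ in $(A,\cdot)$; so $a_0=a$). Then the set \[B=\Bigl\{\sum_{i\in\mathbb{Z}}x_ia_i\;\Big|\; x_i\in\mathbb{Z}\text{ for all } i,\ \{i\mid x_i\neq0\}\text{ finite}\Bigr\}\] is the subbrace of $A$ generated by $a$. Moreover, if $D=\{\sum_{i\in\mathbb{Z}}x_ia_i\in B\mid \sum_{i\in\mathbb{Z}}x_i=0\}$ (sums over finitely supported integer families), then $B*B=D$.
   Context: A left brace $(A,+,\cdot)$ is a set $A$ with two binary operations such that $(A,+)$ is an abelian group, $(A,\cdot)$ is a group, and $a(b+c)=ab-a+ac$ for all $a,b,c\in A$. For $a,b\in A$ set $\lambda_a(b)=-a+ab$ and $a*b=-a+ab-b=\lambda_a(b)-b$. For subsets $L,M\subseteq A$, $L*M$ is the subgroup of $(A,+)$ generated by $\{l*m\mid l\in L,m\in M\}$. Set $A^{(1)}=A$ and $A^{(r+1)}=A^{(r)}*A$ for $r\ge1$. A subbrace of $A$ is a subset that is a subgroup of both $(A,+)$ and $(A,\cdot)$; the subbrace generated by $a$ is the intersection of all subbraces containing $a$. *)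

(* Defs.v *)
From mathcomp Require Import all_boot all_order all_algebra.
Set Implicit Arguments. Unset Strict Implicit. Unset Printing Implicit Defensive.
Import GRing.Theory.
Local Open Scope ring_scope.

Record left_brace (A : zmodType) (mul : A -> A -> A) (one : A) (inv : A -> A)
  : Prop := LeftBrace {
  lb_mulA : forall a b c, mul a (mul b c) = mul (mul a b) c;
  lb_mul1g : forall a, mul one a = a;
  lb_mulg1 : forall a, mul a one = a;
  lb_mulVg : forall a, mul (inv a) a = one;
  lb_mulgV : forall a, mul a (inv a) = one;
  lb_distr : forall a b c, mul a (b + c) = mul a b - a + mul a c
}.

Section Brace.
Variables (A : zmodType) (mul : A -> A -> A) (one : A) (inv : A -> A).

Definition blambda (a b : A) : A := - a + mul a b.
Definition bstar (a b : A) : A := - a + mul a b - b.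

Definition bpow (a : A) (n : int) : A :=
  match n with
  | Posz k => iter k (mul a) one
  | Negz k => iter k.+1 (mul (inv a)) one
  end.

Definition is_add_subgroup (S : A -> Prop) : Prop :=
  [/\ S 0, (forall x y, S x -> S y -> S (x + y)) & (forall x, S x -> S (- x))].

Definition is_mul_subgroup (S : A -> Prop) : Prop :=
  [/\ S one, (forall x y, S x -> S y -> S (mul x y)) & (forall x, S x -> S (inv x))].

Definition is_subbrace (S : A -> Prop) : Prop :=
  is_add_subgroup S /\ is_mul_subgroup S.

Definition gen_subbrace (a : A) : A -> Prop :=
  fun x => forall S, is_subbrace S -> S a -> S x.

Definition set_star (L M : A -> Prop) : A -> Prop :=
  fun x => forall S, is_add_subgroup S ->
    (forall l m, L l -> M m -> S (bstar l m)) -> S x.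

Fixpoint brace_series (r : nat) : A -> Prop :=
  match r with
  | 0 | 1 => fun _ => True
  | r'.+1 => set_star (brace_series r') (fun _ => True)
  end.

Definition a_idx (a : A) (i : int) : A := blambda (bpow a i) a.

Definition Bset (a : A) : A -> Prop :=
  fun b => exists (s : seq int) (x : int -> int),
    uniq s /\ b = \sum_(i <- s) (a_idx a i *~ x i).

Definition Dset (a : A) : A -> Prop :=
  fun b => exists (s : seq int) (x : int -> int),
    [/\ uniq s, b = \sum_(i <- s) (a_idx a i *~ x i) & \sum_(i <- s) x i = 0].

End Brace.

(* Main.v *)
Require Import Defs.
From mathcomp Require Import all_boot all_order all_algebra zify.
Set Implicit Arguments. Unset Strict Implicit. Unset Printing Implicit Defensive.
Import GRing.Theory.
Local Open Scope ring_scope.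

Lemma zsolve (G : zmodType) (x y z : G) : x = y + z -> z = x - y.
Proof. by move=> ->; rewrite addrC addKr. Qed.

Section Basics.
Variables (A : zmodType) (mul : A -> A -> A) (one : A) (inv : A -> A).
Hypothesis HA : left_brace mul one inv.

Local Notation lam := (blambda mul).

Lemma one0 : one = 0.
Proof.
have := lb_distr HA one 0 0.
rewrite addr0 (lb_mul1g HA) addr0 sub0r => /eqP.
by rewrite eq_sym oppr_eq0 => /eqP.
Qed.

Lemma mulg0 x : mul x 0 = x.
Proof. by rewrite -one0 (lb_mulg1 HA). Qed.

Lemma mul_opp w b : mul w (- b) = w + w - mul w b.
Proof.
have := lb_distr HA w b (- b). rewrite subrr mulg0 => /zsolve ->.
by rewrite opprB addrA.
Qed.

Lemma lam_add w b c : lam w (b + c) = lam w b + lam w c.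
Proof.
rewrite /blambda (lb_distr HA).
by rewrite !addrA.
Qed.

Lemma lam0 w : lam w 0 = 0.
Proof.
have := lam_add w 0 0; rewrite addr0 => /zsolve; by rewrite subrr.
Qed.

Lemma lamN w b : lam w (- b) = - lam w b.
Proof.
have := lam_add w b (- b); rewrite subrr lam0 => /zsolve.
by rewrite sub0r.
Qed.

Lemma lamB w b c : lam w (b - c) = lam w b - lam w c.
Proof. by rewrite lam_add lamN. Qed.

Lemma lamMz w b n : lam w (b *~ n) = lam w b *~ n.
Proof.
have H m : lam w (b *+ m) = lam w b *+ m.
  elim: m => [|m IH]; first by rewrite !mulr0n lam0.
  by rewrite !mulrS lam_add IH.
case: n => m; first exact: H.
by rewrite !NegzE !mulrNz lamN -!pmulrn H.
Qed.

Lemma lam_sum (I : Type) (r : seq I) (F : I -> A) w :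
  lam w (\sum_(i <- r) F i) = \sum_(i <- r) lam w (F i).
Proof.
elim: r => [|i r IH]; first by rewrite !big_nil lam0.
by rewrite !big_cons lam_add IH.
Qed.

Lemma lam_one c : lam one c = c.
Proof. by rewrite /blambda (lb_mul1g HA) one0 oppr0 add0r. Qed.

Lemma lam_mul u v c : lam (mul u v) c = lam u (lam v c).
Proof.
rewrite [lam v c]/blambda lam_add lamN /blambda (lb_mulA HA).
rewrite !opprD !opprK.
set x := mul u v; set y := mul x c.
by rewrite !addrA (addrAC u) subrr add0r.
Qed.

Lemma mul_eq x y : mul x y = x + lam x y.
Proof. by rewrite /blambda addNKr. Qed.

Lemma lamVK w c : lam (inv w) (lam w c) = c.
Proof. by rewrite -lam_mul (lb_mulVg HA) lam_one. Qed.

Lemma lamKV w c : lam w (lam (inv w) c) = c.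
Proof. by rewrite -lam_mul (lb_mulgV HA) lam_one. Qed.

Lemma lam_bstar w p q :
  lam w (bstar mul p q) = bstar mul (mul (mul w p) (inv w)) (lam w q).
Proof.
rewrite /bstar -[- p + _]/(lam p q) -[- _ + mul _ (lam w q)]/(lam _ (lam w q)).
by rewrite lamB -!lam_mul -(lb_mulA HA) (lb_mulVg HA) (lb_mulg1 HA).
Qed.

Hypothesis H3 : forall x : A, brace_series mul 3 x -> x = 0.

Lemma gen_triv p q c : lam (bstar mul p q) c = c.
Proof.
have : bstar mul (bstar mul p q) c = 0.
  apply: H3 => S _ HS; apply: HS => // T _ HT; exact: HT.
by rewrite /bstar -/(lam _ c) => /eqP; rewrite subr_eq0 => /eqP.
Qed.

Lemma lam_hom x y c : lam (x + y) c = lam x (lam y c).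
Proof.
set u := x + y.
set g := lam (inv u) (bstar mul x y).
have Hg : forall c', lam g c' = c' by move=> c'; rewrite /g lam_bstar gen_triv.
have E : mul u g = mul x y.
  rewrite mul_eq /g lamKV /bstar /u.
  by rewrite !addrA (addrAC x) subrr add0r (addrAC y) subrr add0r.
by rewrite -lam_mul -E lam_mul Hg.
Qed.

End Basics.

Lemma addsub_mulz (A : zmodType) (S : A -> Prop) c n :
  is_add_subgroup S -> S c -> S (c *~ n).
Proof.
move=> [S0 SD SN] Sc.
have H m : S (c *+ m) by elim: m => [|m IH]; rewrite ?mulr0n ?mulrS //; apply: SD.
case: n => m; first exact: H.
rewrite NegzE mulrNz; apply: SN; exact: H.
Qed.

Lemma addsub_sum (A : zmodType) (S : A -> Prop) (I : Type) (r : seq I) F :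
  is_add_subgroup S -> (forall i, S (F i)) -> S (\sum_(i <- r) F i).
Proof.
move=> [S0 SD SN] HF; elim: r => [|i r IH]; rewrite ?big_nil ?big_cons //.
exact: SD.
Qed.

Lemma part_sum (G : zmodType) (F : int * int -> G) l :
  \sum_(i <- undup (map fst l)) \sum_(p <- l | p.1 == i) F p = \sum_(p <- l) F p.
Proof.
under eq_bigr do rewrite big_mkcond.
rewrite exchange_big /= big_seq [RHS]big_seq; apply: eq_bigr => p pl.
have pin : p.1 \in undup (map fst l) by rewrite mem_undup; apply: map_f.
rewrite (bigD1_seq p.1) ?undup_uniq //= eqxx big1 ?addr0 //.
by move=> i; rewrite eq_sym => /negbTE ->.
Qed.

Section Main.
Variables (A : zmodType) (mul : A -> A -> A) (one : A) (inv : A -> A).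
Hypothesis HA : left_brace mul one inv.
Hypothesis H3 : forall x : A, brace_series mul 3 x -> x = 0.
Variable a : A.

Local Notation lam := (blambda mul).
Local Notation ai := (a_idx mul one inv a).
Local Notation bp := (bpow mul one inv a).

Definition SpanF (l : seq (int * int)) := \sum_(p <- l) ai p.1 *~ p.2.
Definition Span x := exists l, x = SpanF l.
Definition DSpan x := exists l, x = SpanF l /\ \sum_(p <- l) p.2 = 0.

Lemma bp_succ i : mul a (bp i) = bp (i + 1).
Proof.
case: i => k.
  rewrite -[1]/(Posz 1) -PoszD addn1; exact: erefl.
case: k => [|k].
  have -> : Negz 0 + 1 = 0 by rewrite NegzE; lia.
  by rewrite /bpow /= (lb_mulA HA) (lb_mulgV HA) (lb_mulg1 HA).
have -> : Negz k.+1 + 1 = Negz k by rewrite !NegzE; lia.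
by rewrite /bpow /= (lb_mulA HA) (lb_mulgV HA) (lb_mul1g HA).
Qed.

Lemma ai0 : ai 0 = a.
Proof. by rewrite /a_idx /= (lam_one HA). Qed.

Definition P x k := forall i, lam x (ai i) = ai (i + k).

Lemma P0 : P 0 0.
Proof. by move=> i; rewrite -(one0 HA) (lam_one HA) // addr0. Qed.

Lemma P_add x y k m : P x k -> P y m -> P (x + y) (k + m).
Proof.
move=> Hx Hy i; rewrite (lam_hom HA H3) Hy Hx.
by rewrite [k + m]addrC addrA.
Qed.

Lemma P_neg x k : P x k -> P (- x) (- k).
Proof.
move=> Hx i; rewrite -{1}(subrK k i) -Hx -(lam_hom HA H3) addNr.
by rewrite -(one0 HA) (lam_one HA).
Qed.

Lemma P_mulz x k n : P x k -> P (x *~ n) (k * n).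
Proof.
move=> Hx.
have H m : P (x *+ m) (k * m%:Z).
  elim: m => [|m IH]; first by rewrite mulr0n mulr0; exact: P0.
  by rewrite mulrS -addn1 PoszD mulrDr mulr1 addrC; apply: P_add.
case: n => m; first exact: H.
rewrite NegzE mulrNz mulrN; apply: P_neg; exact: H.
Qed.

Lemma lam_ai j c : lam (ai j) c = lam a c.
Proof.
have E : bp j + ai j = mul (bp j) a by rewrite /a_idx /blambda addNKr.
have := lam_mul HA (bp j) a c.
rewrite -E (lam_hom HA H3) => /(congr1 (lam (inv (bp j)))).
by rewrite !(lamVK HA).
Qed.

Lemma P_ai j : P (ai j) 1.
Proof.
move=> i; rewrite lam_ai {1}/a_idx -(lam_mul HA) bp_succ.
by [].
Qed.

Lemma P_span l : P (SpanF l) (\sum_(p <- l) p.2).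
Proof.
elim: l => [|p l IH]; rewrite /SpanF ?big_nil ?big_cons; first exact: P0.
apply: P_add => //; have := @P_mulz _ _ p.2 (P_ai p.1); by rewrite mul1r.
Qed.

Lemma shift w k l : P w k ->
  lam w (SpanF l) = SpanF [seq (p.1 + k, p.2) | p <- l].
Proof.
move=> Hw; rewrite /SpanF (lam_sum HA) big_map; apply: eq_bigr => p _.
by rewrite (lamMz HA) Hw.
Qed.

Lemma Span_sub : is_add_subgroup Span.
Proof.
split.
- by exists [::]; rewrite /SpanF big_nil.
- move=> _ _ [l1 ->] [l2 ->]; exists (l1 ++ l2); by rewrite /SpanF big_cat.
- move=> _ [l ->]; exists [seq (p.1, - p.2) | p <- l].
  rewrite /SpanF big_map -sumrN; apply: eq_bigr => p _; by rewrite mulrNz.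
Qed.

Lemma DSpan_sub : is_add_subgroup DSpan.
Proof.
split.
- by exists [::]; rewrite /SpanF !big_nil.
- move=> _ _ [l1 [-> H1]] [l2 [-> H2]]; exists (l1 ++ l2).
  by rewrite /SpanF !big_cat /= H1 H2 addr0.
- move=> _ [l [-> H]]; exists [seq (p.1, - p.2) | p <- l].
  split; last by rewrite big_map /= sumrN H oppr0.
  rewrite /SpanF big_map -sumrN; apply: eq_bigr => p _; by rewrite mulrNz.
Qed.

Lemma Bset_Span x : Bset mul one inv a x <-> Span x.
Proof.
split.
  move=> [s [f [_ ->]]]; exists [seq (i, f i) | i <- s].
  by rewrite /SpanF big_map.
move=> [l ->]; exists (undup (map fst l)).
exists (fun i => \sum_(p <- l | p.1 == i) p.2); split; first exact: undup_uniq.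
rewrite /SpanF -(part_sum (fun p => ai p.1 *~ p.2)).
apply: eq_bigr => i _; rewrite mulrz_sumr; apply: eq_bigr => p /eqP -> //.
Qed.

Lemma Dset_DSpan x : Dset mul one inv a x <-> DSpan x.
Proof.
split.
  move=> [s [f [_ -> H]]]; exists [seq (i, f i) | i <- s].
  by rewrite /SpanF !big_map.
move=> [l [-> H]]; exists (undup (map fst l)).
exists (fun i => \sum_(p <- l | p.1 == i) p.2); split; first exact: undup_uniq.
  rewrite /SpanF -(part_sum (fun p => ai p.1 *~ p.2)).
  apply: eq_bigr => i _; rewrite mulrz_sumr; apply: eq_bigr => p /eqP -> //.
by rewrite (part_sum (fun p => p.2)).
Qed.

Lemma sub_bp S : is_subbrace mul one inv S -> S a -> forall i, S (bp i).
Proof.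
move=> [_ [S1 SM SV]] Sa [] k.
  elim: k => [|k IH] //=; exact: SM.
elim: k => [|k IH] /=; first by apply: SM => //; apply: SV.
apply: SM => //; exact: SV.
Qed.

Lemma Span_P x : Span x -> exists k, P x k.
Proof. move=> [l ->]; eexists; exact: P_span. Qed.

Lemma Span_lam w y : Span w -> Span y -> exists k, P w k /\ Span (lam w y).
Proof.
move=> /Span_P [k Hk] [l ->]; exists k; split => //.
by eexists; apply: shift.
Qed.

Lemma Span_brace : is_subbrace mul one inv Span.
Proof.
split; first exact: Span_sub.
have [S0 SD SN] := Span_sub.
split.
- by rewrite (one0 HA).
- move=> x y Sx Sy; rewrite mul_eq; apply: SD => //.
  by have [k [_ ?]] := Span_lam Sx Sy.
- move=> x Sx.
  have [k Hk] := Span_P Sx.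
  have Hv : P (inv x) (- k).
    move=> i; rewrite -{1}(subrK k i) -Hk -(lam_mul HA) (lb_mulVg HA).
    by rewrite (lam_one HA).
  have -> : inv x = lam (inv x) (- x).
    rewrite /blambda (mul_opp HA) (lb_mulVg HA) (one0 HA) subr0.
    by rewrite addrA addNr add0r.
  have [l El] := SN _ Sx.
  by rewrite El; eexists; apply: shift Hv.
Qed.

Lemma Span_a : Span a.
Proof. by exists [:: (0, 1)]; rewrite /SpanF big_cons big_nil addr0 ai0. Qed.

Lemma part1 x : Bset mul one inv a x <-> gen_subbrace mul one inv a x.
Proof.
rewrite Bset_Span; split.
  move=> [l ->] S HS Sa; apply: addsub_sum; first by case: HS.
  move=> p; apply: addsub_mulz; first by case: HS.
  have [[_ SD SN] [_ SM _]] := HS.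
  rewrite /a_idx /blambda; apply: SD; first by apply: SN; apply: sub_bp.
  by apply: SM => //; apply: sub_bp.
move=> H; apply: H; [exact: Span_brace | exact: Span_a].
Qed.

Lemma part2 x : set_star mul (Bset mul one inv a) (Bset mul one inv a) x <->
                 Dset mul one inv a x.
Proof.
rewrite Dset_DSpan; split.
  move=> H; apply: H; first exact: DSpan_sub.
  move=> l m /Bset_Span Hl /Bset_Span [lm ->].
  have [k Hk] := Span_P Hl.
  exists ([seq (p.1 + k, p.2) | p <- lm] ++ [seq (p.1, - p.2) | p <- lm]).
  rewrite /bstar -[- l + _]/(lam l _) (shift _ Hk) /SpanF !big_cat /= !big_map /=.
  split; last by rewrite sumrN subrr.
  congr (_ + _); rewrite -sumrN; apply: eq_bigr => p _; by rewrite mulrNz.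
move=> [l [-> Hs]] S HS Hgen.
have -> : SpanF l = \sum_(p <- l) (ai p.1 - ai 0) *~ p.2.
  under [RHS]eq_bigr do rewrite mulrzBl.
  by rewrite big_split /= sumrN -mulrz_sumr Hs mulr0z subr0.
apply: addsub_sum => // p; apply: addsub_mulz => //.
rewrite ai0; apply: Hgen.
  by apply/part1 => S' HS' Sa; apply: sub_bp.
by apply/part1 => S' HS' Sa.
Qed.

End Main.

Theorem theoremB (A : zmodType) (mul : A -> A -> A) (one : A) (inv : A -> A)
  (HA : left_brace mul one inv)
  (H3 : forall x : A, brace_series mul 3 x -> x = 0)
  (a : A) :
  (forall x : A, Bset mul one inv a x <-> gen_subbrace mul one inv a x) /\
  (forall x : A, set_star mul (Bset mul one inv a) (Bset mul one inv a) x <->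
                 Dset mul one inv a x).
Proof. split => x; [exact: part1 | exact: part2]. Qed.
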